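(* Let $M,N\in\mathbb N$ and let $\mathcal Q\in\mathbb M_{\mathrm{TS}}$. Then for every T-junction $v\in\mathsf T(\mathcal Q)$ there is a unique element $Q_v\in\mathcal Q$ with $v\in\mathsf T(Q_v)$. Moreover, the sets $\mathsf T_{\mathrm h}(\mathcal Q)$ and $\mathsf T_{\mathrm v}(\mathcal Q)$ are disjoint and $\mathsf T_{\mathrm h}(\mathcal Q)\cup\mathsf T_{\mathrm v}(\mathcal Q)=\mathsf T(\mathcal Q)$.
   Context: Let $\mathcal Q_0=\{[m-1,m]\times[n-1,n]: m\in\{1,\dots,M\},\ n\in\{1,\dots,N\}\}$. For a rectangle $Q=[x,x+\tilde x]\times[y,y+\tilde y]$, $j\in\{1,2\}$ and $0<q<1$, define $\mathrm{bisect}_{j,q}(Q)=\{[x,x+q\tilde x]\times[y,y+\tilde y],\ [x+q\tilde x,x+\tilde x]\times[y,y+\tilde y]\}$ if $j=1$ and $\mathrm{bisect}_{j,q}(Q)=\{[x,x+\tilde x]\times[y,y+q\tilde y],\ [x,x+\tilde x]\times[y+q\tilde y,y+\tilde y]\}$ if $j=2$. The mesh class $\mathbb M_{\mathrm{TS}}$ is the smallest set of finite sets of closed rectangles such that $\mathcal Q_0\in\mathbb M_{\mathrm{TS}}$ and, whenever $\mathcal Q\in\mathbb M_{\mathrm{TS}}$, $Q\in\mathcal Q$, $j\in\{1,2\}$, $0<q<1$, also $(\mathcal Q\setminus\{Q\})\cup\mathrm{bisect}_{j,q}(Q)\in\mathbb M_{\mathrm{TS}}$. For $Q=[x,x+\tilde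 x]\times[y,y+\tilde y]$ define the vertex set $\mathsf V(Q)=\{x,x+\tilde x\}\times\{y,y+\tilde y\}$, the vertical sides $\mathrm{vsk}(Q)=\{x,x+\tilde x\}\times[y,y+\tilde y]$ and horizontal sides $\mathrm{hsk}(Q)=[x,x+\tilde x]\times\{y,y+\tilde y\}$. For a mesh $\mathcal Q$, $\mathsf V(\mathcal Q)=\bigcup_{Q\in\mathcal Q}\mathsf V(Q)$; for $Q\in\mathcal Q$, $\mathsf T(Q)=(\mathsf V(\mathcal Q)\cap Q)\setminus\mathsf V(Q)$ and $\mathsf T(\mathcal Q)=\bigcup_{Q\in\mathcal Q}\mathsf T(Q)$ (T-junctions). Further $\mathsf T_{\mathrm h}(Q)=\{v\in\mathsf T(Q): v\in\mathrm{vsk}(Q)\}$, $\mathsf T_{\mathrm v}(Q)=\{v\in\mathsf T(Q): v\in\mathrm{hsk}(Q)\}$, $\mathsf T_{\mathrm h}(\mathcal Q)=\bigcup_{Q\in\mathcal Q}\mathsf T_{\mathrm h}(Q)$, $\mathsf T_{\mathrm v}(\mathcal Q)=\bigcup_{Q\in\mathcal Q}\mathsf T_{\mathrm v}(Q)$. *)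

(* Defs.v *)
From Stdlib Require Import Reals.
Open Scope R_scope.

(* A rectangle [x, x + w] x [y, y + h], stored by (x, y, w, h). *)
Record rect := mkRect { rx : R; ry : R; rw : R; rh : R }.

Definition point := (R * R)%type.

(* A mesh: a set of rectangles (finiteness is automatic for M_TS). *)
Definition mesh := rect -> Prop.

Definition in_rect (Q : rect) (v : point) : Prop :=
  rx Q <= fst v <= rx Q + rw Q /\ ry Q <= snd v <= ry Q + rh Q.

Definition Q0 (M N : nat) : mesh := fun Q =>
  exists m n : nat, (1 <= m <= M)%nat /\ (1 <= n <= N)%nat /\
    Q = mkRect (INR m - 1) (INR n - 1) 1 1.

(* bisect_{j,q}(Q), j = true means j = 1 (vertical cut), false means j = 2 *)
Definition bisect (j : bool) (q : R) (Q : rect) : mesh := fun Q' =>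
  if j then
    Q' = mkRect (rx Q) (ry Q) (q * rw Q) (rh Q) \/
    Q' = mkRect (rx Q + q * rw Q) (ry Q) (rw Q - q * rw Q) (rh Q)
  else
    Q' = mkRect (rx Q) (ry Q) (rw Q) (q * rh Q) \/
    Q' = mkRect (rx Q) (ry Q + q * rh Q) (rw Q) (rh Q - q * rh Q).

Definition refine (Qs : mesh) (Q : rect) (j : bool) (q : R) : mesh :=
  fun Q' => (Qs Q' /\ Q' <> Q) \/ bisect j q Q Q'.

Inductive MTS (M N : nat) : mesh -> Prop :=
  | MTS_init : MTS M N (Q0 M N)
  | MTS_step : forall (Qs : mesh) (Q : rect) (j : bool) (q : R),
      MTS M N Qs -> Qs Q -> 0 < q < 1 -> MTS M N (refine Qs Q j q).

Definition Vrect (Q : rect) (v : point) : Prop :=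
  (fst v = rx Q \/ fst v = rx Q + rw Q) /\ (snd v = ry Q \/ snd v = ry Q + rh Q).

Definition vsk (Q : rect) (v : point) : Prop :=
  (fst v = rx Q \/ fst v = rx Q + rw Q) /\ ry Q <= snd v <= ry Q + rh Q.
Definition hsk (Q : rect) (v : point) : Prop :=
  rx Q <= fst v <= rx Q + rw Q /\ (snd v = ry Q \/ snd v = ry Q + rh Q).

Definition Vmesh (Qs : mesh) (v : point) : Prop := exists Q, Qs Q /\ Vrect Q v.

Definition Trect (Qs : mesh) (Q : rect) (v : point) : Prop :=
  Vmesh Qs v /\ in_rect Q v /\ ~ Vrect Q v.
Definition Tmesh (Qs : mesh) (v : point) : Prop :=
  exists Q, Qs Q /\ Trect Qs Q v.

Definition Th_rect (Qs : mesh) (Q : rect) (v : point) : Prop :=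
  Trect Qs Q v /\ vsk Q v.
Definition Tv_rect (Qs : mesh) (Q : rect) (v : point) : Prop :=
  Trect Qs Q v /\ hsk Q v.
Definition Th_mesh (Qs : mesh) (v : point) : Prop :=
  exists Q, Qs Q /\ Th_rect Qs Q v.
Definition Tv_mesh (Qs : mesh) (v : point) : Prop :=
  exists Q, Qs Q /\ Tv_rect Qs Q v.

(* Main.v *)
Require Import Defs.
From Stdlib Require Import Reals Lra Classical.
Open Scope R_scope.

Definition Sep (Q1 Q2 : rect) : Prop :=
  rx Q1 + rw Q1 <= rx Q2 \/ rx Q2 + rw Q2 <= rx Q1 \/
  ry Q1 + rh Q1 <= ry Q2 \/ ry Q2 + rh Q2 <= ry Q1.

Definition Inv (Qs : mesh) : Prop :=
  (forall Q, Qs Q -> 0 < rw Q /\ 0 < rh Q) /\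
  (forall Q1 Q2, Qs Q1 -> Qs Q2 -> Q1 <> Q2 -> Sep Q1 Q2).

Definition subr (P Q : rect) : Prop :=
  rx Q <= rx P /\ rx P + rw P <= rx Q + rw Q /\
  ry Q <= ry P /\ ry P + rh P <= ry Q + rh Q.

Ltac sep_solve := unfold Sep; simpl;
  first [left; lra | right; left; lra | right; right; left; lra | right; right; right; lra].

Lemma bisect_sub j q Q P : 0 < q < 1 -> 0 < rw Q -> 0 < rh Q -> bisect j q Q P ->
  (0 < rw P /\ 0 < rh P) /\ subr P Q.
Proof.
  intros Hq Hw Hh H; unfold subr; destruct j; destruct H; subst; simpl;
  repeat split; nra.
Qed.

Lemma sep_subl P Q R : Sep Q R -> subr P Q -> Sep P R.
Proof.
  unfold subr; intros H [? [? [? ?]]].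
  destruct H as [H|[H|[H|H]]]; sep_solve.
Qed.

Lemma sep_subr P Q R : Sep R Q -> subr P Q -> Sep R P.
Proof.
  unfold subr; intros H [? [? [? ?]]].
  destruct H as [H|[H|[H|H]]]; sep_solve.
Qed.

Lemma halves j q Q P1 P2 : bisect j q Q P1 -> bisect j q Q P2 -> P1 <> P2 -> Sep P1 P2.
Proof.
  intros H1 H2 Hn; destruct j; destruct H1; destruct H2; subst;
  try congruence; sep_solve.
Qed.

Lemma nat_sep (m m' : nat) : (m < m')%nat -> INR m + 1 <= INR m'.
Proof.
  intro H. rewrite <- S_INR. apply le_INR. exact H.
Qed.

Lemma Inv_MTS M N Qs : MTS M N Qs -> Inv Qs.
Proof.
  induction 1.
  - split.
    + intros Q [m [n [_ [_ ->]]]]; simpl; lra.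
    + intros Q1 Q2 [m [n [_ [_ ->]]]] [m' [n' [_ [_ ->]]]] Hne.
      destruct (Nat.lt_total m m') as [Hm|[Hm|Hm]].
      * apply nat_sep in Hm; sep_solve.
      * subst. destruct (Nat.lt_total n n') as [Hn|[Hn|Hn]].
        -- apply nat_sep in Hn; sep_solve.
        -- subst; congruence.
        -- apply nat_sep in Hn; sep_solve.
      * apply nat_sep in Hm; sep_solve.
  - destruct IHMTS as [Hd Hs].
    destruct (Hd Q H0) as [Hw Hh].
    split.
    + intros P [[HP _]|HP]; [auto|].
      exact (proj1 (bisect_sub j q Q P H1 Hw Hh HP)).
    + intros P1 P2 [[HP1 HP1n]|HP1] [[HP2 HP2n]|HP2] Hne.
      * auto.
      * apply (sep_subr P2 Q); [auto|exact (proj2 (bisect_sub j q Q P2 H1 Hw Hh HP2))].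
      * apply (sep_subl P1 Q); [auto|exact (proj2 (bisect_sub j q Q P1 H1 Hw Hh HP1))].
      * eapply halves; eauto.
Qed.

Definition cover (Q : rect) (v : point) (a b : bool) : Prop :=
  (if a then rx Q <= fst v < rx Q + rw Q else rx Q < fst v <= rx Q + rw Q) /\
  (if b then ry Q <= snd v < ry Q + rh Q else ry Q < snd v <= ry Q + rh Q).

Lemma cover_sep Q1 Q2 v a b : Sep Q1 Q2 -> cover Q1 v a b -> cover Q2 v a b -> False.
Proof.
  unfold cover, Sep; destruct a, b; simpl; lra.
Qed.

Lemma same_quad Qs Q1 Q2 v a b : Inv Qs -> Qs Q1 -> Qs Q2 ->
  cover Q1 v a b -> cover Q2 v a b -> Q1 = Q2.
Proof.
  intros [_ Hs] H1 H2 C1 C2.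
  destruct (classic (Q1 = Q2)) as [E|E]; auto.
  exfalso; exact (cover_sep Q1 Q2 v a b (Hs _ _ H1 H2 E) C1 C2).
Qed.

Lemma lt_of_le_ne a b : a <= b -> a <> b -> a < b.
Proof. intros H H'; destruct (Rle_lt_or_eq_dec a b H); [auto|contradiction]. Qed.

Lemma corner Q v : 0 < rw Q -> 0 < rh Q -> Vrect Q v -> exists a b, cover Q v a b.
Proof.
  intros Hw Hh [[Hx|Hx] [Hy|Hy]];
  [exists true, true | exists true, false | exists false, true | exists false, false];
  unfold cover; simpl; lra.
Qed.

Lemma edgeV Q v : 0 < rw Q -> 0 < rh Q -> vsk Q v -> ~ Vrect Q v ->
  exists a, forall b, cover Q v a b.
Proof.
  intros Hw Hh [Hx [Hy1 Hy2]] Hn.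
  assert (A1 : ry Q < snd v).
  { apply lt_of_le_ne; auto. intro E; apply Hn; split; auto. }
  assert (A2 : snd v < ry Q + rh Q).
  { apply lt_of_le_ne; auto. intro E; apply Hn; split; auto. }
  destruct Hx as [Hx|Hx]; [exists true | exists false]; intro b; destruct b;
  unfold cover; simpl; lra.
Qed.

Lemma edgeH Q v : 0 < rw Q -> 0 < rh Q -> hsk Q v -> ~ Vrect Q v ->
  exists b, forall a, cover Q v a b.
Proof.
  intros Hw Hh [[Hx1 Hx2] Hy] Hn.
  assert (A1 : rx Q < fst v).
  { apply lt_of_le_ne; auto. intro E; apply Hn; split; auto. }
  assert (A2 : fst v < rx Q + rw Q).
  { apply lt_of_le_ne; auto. intro E; apply Hn; split; auto. }
  destruct Hy as [Hy|Hy]; [exists true | exists false]; intro a; destruct a;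
  unfold cover; simpl; lra.
Qed.

Lemma vsk_or_hsk Qs Q v : Inv Qs -> Qs Q -> Trect Qs Q v -> vsk Q v \/ hsk Q v.
Proof.
  intros I HQ [[Q3 [H3 V3]] [[[Hx1 Hx2] [Hy1 Hy2]] Hn]].
  destruct (proj1 I Q HQ) as [Hw Hh].
  destruct (proj1 I Q3 H3) as [Hw3 Hh3].
  destruct (Req_dec (fst v) (rx Q)) as [E|E1]; [left; split; auto|].
  destruct (Req_dec (fst v) (rx Q + rw Q)) as [E|E2]; [left; split; auto|].
  destruct (Req_dec (snd v) (ry Q)) as [E|E3]; [right; split; auto|].
  destruct (Req_dec (snd v) (ry Q + rh Q)) as [E|E4]; [right; split; auto|].
  exfalso.
  destruct (corner Q3 v Hw3 Hh3 V3) as [a [b C3]].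
  assert (C : cover Q v a b).
  { assert (rx Q < fst v) by (apply lt_of_le_ne; auto).
    assert (fst v < rx Q + rw Q) by (apply lt_of_le_ne; auto).
    assert (ry Q < snd v) by (apply lt_of_le_ne; auto).
    assert (snd v < ry Q + rh Q) by (apply lt_of_le_ne; auto).
    unfold cover; destruct a, b; simpl; lra. }
  pose proof (same_quad Qs Q3 Q v a b I H3 HQ C3 C). subst. auto.
Qed.

Lemma edge Q v : 0 < rw Q -> 0 < rh Q -> vsk Q v \/ hsk Q v -> ~ Vrect Q v ->
  exists s, (forall a, cover Q v a s) \/ (forall b, cover Q v s b).
Proof.
  intros Hw Hh [H|H] Hn.
  - destruct (edgeV Q v Hw Hh H Hn) as [a Ha]; exists a; auto.
  - destruct (edgeH Q v Hw Hh H Hn) as [b Hb]; exists b; auto.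
Qed.

Lemma common (C1 C2 : bool -> bool -> Prop) a b s1 s2 :
  ~ C1 a b -> ~ C2 a b ->
  ((forall x, C1 x s1) \/ (forall y, C1 s1 y)) ->
  ((forall x, C2 x s2) \/ (forall y, C2 s2 y)) ->
  exists x y, C1 x y /\ C2 x y.
Proof.
  intros N1 N2 H1 H2.
  destruct H1 as [H1|H1], H2 as [H2|H2]; destruct a, b, s1, s2;
  first [ solve [exfalso; auto]
        | solve [exists true, true; auto] | solve [exists true, false; auto]
        | solve [exists false, true; auto] | solve [exists false, false; auto] ].
Qed.

Theorem mainTheorem1 (M N : nat) (Qs : mesh) (HQ : MTS M N Qs) :
  (forall v : point, Tmesh Qs v ->
     exists! Qv : rect, Qs Qv /\ Trect Qs Qv v) /\
  (forall v : point, ~ (Th_mesh Qs v /\ Tv_mesh Qs v)) /\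
  (forall v : point, Th_mesh Qs v \/ Tv_mesh Qs v <-> Tmesh Qs v).
Proof.
  pose proof (Inv_MTS M N Qs HQ) as I.
  split; [|split].
  - intros v [Q1 [H1 T1]]. exists Q1. split; [auto|].
    intros Q2 [H2 T2].
    pose proof T1 as [[Q3 [H3 V3]] [_ Hn1]].
    pose proof T2 as [_ [_ Hn2]].
    destruct (proj1 I _ H1) as [Hw1 Hh1].
    destruct (proj1 I _ H2) as [Hw2 Hh2].
    destruct (proj1 I _ H3) as [Hw3 Hh3].
    destruct (corner Q3 v Hw3 Hh3 V3) as [a [b C3]].
    destruct (edge Q1 v Hw1 Hh1 (vsk_or_hsk Qs Q1 v I H1 T1) Hn1) as [s1 E1].
    destruct (edge Q2 v Hw2 Hh2 (vsk_or_hsk Qs Q2 v I H2 T2) Hn2) as [s2 E2].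
    assert (N1 : ~ cover Q1 v a b).
    { intro C. pose proof (same_quad Qs Q3 Q1 v a b I H3 H1 C3 C); subst; auto. }
    assert (N2 : ~ cover Q2 v a b).
    { intro C. pose proof (same_quad Qs Q3 Q2 v a b I H3 H2 C3 C); subst; auto. }
    destruct (common (cover Q1 v) (cover Q2 v) a b s1 s2 N1 N2 E1 E2) as [x [y [C1 C2]]].
    exact (same_quad Qs Q1 Q2 v x y I H1 H2 C1 C2).
  - intros v [[Q1 [H1 [T1 S1]]] [Q2 [H2 [T2 S2]]]].
    pose proof T1 as [_ [_ Hn1]].
    pose proof T2 as [_ [_ Hn2]].
    destruct (proj1 I _ H1) as [Hw1 Hh1].
    destruct (proj1 I _ H2) as [Hw2 Hh2].
    destruct (edgeV Q1 v Hw1 Hh1 S1 Hn1) as [a Ha].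
    destruct (edgeH Q2 v Hw2 Hh2 S2 Hn2) as [b Hb].
    pose proof (same_quad Qs Q1 Q2 v a b I H1 H2 (Ha b) (Hb a)). subst.
    apply Hn1. destruct S1, S2; split; auto.
  - intro v; split.
    + intros [[Q [H [T _]]]|[Q [H [T _]]]]; exists Q; auto.
    + intros [Q [H T]].
      destruct (vsk_or_hsk Qs Q v I H T) as [S|S];
      [left|right]; exists Q; split; auto; split; auto.
Qed.
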